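(* Let $L$ be an $R_0$-algebra. Let $\{F_t\mid t\in\Lambda\}$, where $\Lambda\subseteq(0,0.5]$, be a collection of fated filters of $L$ such that (i) $L=\bigcup_{t\in\Lambda}F_t$, and (ii) for all $s,t\in\Lambda$, $s<t$ if and only if $F_t\subset F_s$. Then the fuzzy subset $\mu$ of $L$ defined by $\mu(x)=\sup\{t\in\Lambda\mid x\in F_t\}$ for all $x\in L$ is an $(\in,\in\vee q)$-fuzzy fated filter of $L$.
   Context: An $R_0$-algebra is a bounded distributive lattice $(L,\wedge,\vee,0,1)$ with an order-reversing involution $\neg$ and a binary operation $\to$ such that for all $x,y,z\in L$: $x\to y=\neg y\to\neg x$; $1\to x=x$; $(y\to z)\wedge((x\to y)\to(x\to z))=y\to z$; $x\to(y\to z)=y\to(x\to z)$; $x\to(y\vee z)=(x\to y)\vee(x\to z)$; $(x\to y)\vee((x\to y)\to(\neg x\vee y))=1$. A fated filter of $L$ is a nonempty subset $A\subseteq L$ with $1\in A$ such that for all $x,y\in L$ and $a\in A$, $a\to((x\to y)\to x)\in A$ implies $x\in A$. For $x\in L$, $t\in(0,1]$ and a fuzzy subset $\mu:L\to[0,1]$: $x_t\in\mu$ iff $\mu(x)\ge t$; $x_t\,q\,\mu$ iff $\mu(x)+t>1$; $x_t\in\vee q\,\mu$ iff $x_t\in\mu$ or $x_t\,q\,\mu$. $\mu$ is an $(\in,\in\vee q)$-fuzzy fated filter of $L$ if (1) for all $x\in L$, $t\in(0,1]$: $x_t\in\mu\Rightarrow 1_t\in\vee q\,\mu$; and (2) for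 all $x,a,y\in L$, $t,s\in(0,1]$: if $(a\to((x\to y)\to x))_t\in\mu$ and $a_s\in\mu$ then $x_{\min\{t,s\}}\in\vee q\,\mu$. *)

(* Defs.v *)
From HB Require Import structures.
From mathcomp Require Import all_boot all_order all_algebra.
From mathcomp Require Import boolp classical_sets reals.
Set Implicit Arguments. Unset Strict Implicit. Unset Printing Implicit Defensive.
Import Order.TTheory GRing.Theory Num.Theory.
Local Open Scope classical_set_scope.

(* An R0-algebra structure on a bounded distributive lattice L
   (lattice order <=, meet, join, \bot = 0, \top = 1), with negation [neg]
   and implication [imp]. *)
Definition R0_algebra {d : Order.disp_t} (L : tbDistrLatticeType d)
  (neg : L -> L) (imp : L -> L -> L) : Prop :=
  (forall x y : L, (x <= y)%O -> (neg y <= neg x)%O) /\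
  (forall x : L, neg (neg x) = x) /\
  (forall x y : L, imp x y = imp (neg y) (neg x)) /\
  (forall x : L, imp \top%O x = x) /\
  (forall x y z : L,
      Order.meet (imp y z) (imp (imp x y) (imp x z)) = imp y z) /\
  (forall x y z : L, imp x (imp y z) = imp y (imp x z)) /\
  (forall x y z : L, imp x (Order.join y z) = Order.join (imp x y) (imp x z)) /\
  (forall x y : L,
      Order.join (imp x y) (imp (imp x y) (Order.join (neg x) y)) = \top%O).

Definition fated_filter {d : Order.disp_t} (L : tbDistrLatticeType d)
  (imp : L -> L -> L) (A : set L) : Prop :=
  A !=set0 /\ A \top%O /\
  (forall x y a : L, A a -> A (imp a (imp (imp x y) x)) -> A x).

Local Open Scope ring_scope.

Definition fin {T} {R : realType} (mu : T -> R) (x : T) (t : R) : Prop := t <= mu x.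
Definition fq {T} {R : realType} (mu : T -> R) (x : T) (t : R) : Prop := 1 < mu x + t.
Definition finq {T} {R : realType} (mu : T -> R) (x : T) (t : R) : Prop :=
  fin mu x t \/ fq mu x t.

Definition in_inq_fuzzy_fated_filter {d : Order.disp_t} (L : tbDistrLatticeType d)
  (imp : L -> L -> L) {R : realType} (mu : L -> R) : Prop :=
  (forall x : L, 0 <= mu x <= 1) /\
  (forall (x : L) (t : R), 0 < t <= 1 -> fin mu x t -> finq mu \top%O t) /\
  (forall (x a y : L) (t s : R), 0 < t <= 1 -> 0 < s <= 1 ->
      fin mu (imp a (imp (imp x y) x)) t -> fin mu a s ->
      finq mu x (Num.min t s)).

(* Main.v *)
Require Import Defs.
From HB Require Import structures.
From mathcomp Require Import all_boot all_order all_algebra.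
From mathcomp Require Import boolp classical_sets reals.
Import Order.TTheory GRing.Theory Num.Theory.
Local Open Scope classical_set_scope.
Local Open Scope ring_scope.

Theorem corollary3p29 (d : Order.disp_t) (L : tbDistrLatticeType d)
  (neg : L -> L) (imp : L -> L -> L) (R : realType)
  (Lam : set R) (F : R -> set L) :
  R0_algebra neg imp ->
  (forall t, Lam t -> 0 < t <= 2^-1) ->
  (forall t, Lam t -> fated_filter imp (F t)) ->
  (forall x : L, exists t, Lam t /\ F t x) ->
  (forall s t, Lam s -> Lam t -> (s < t <-> F t `<` F s)) ->
  in_inq_fuzzy_fated_filter imp (fun x : L => sup [set t | Lam t /\ F t x]).
Proof.
move=> _ Hb Hf Hcov Hord.
set mu := fun x : L => sup [set t | Lam t /\ F t x].
have ne : forall x, [set t | Lam t /\ F t x] !=set0.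
  by move=> x; case: (Hcov x) => t [? ?]; exists t.
have hs : forall x, has_sup [set t | Lam t /\ F t x].
  move=> x; split => //; exists 2^-1 => t [/Hb /andP [_ ?] _] //.
have muub : forall x, mu x <= 2^-1.
  by move=> x; apply: ge_sup => // t [/Hb /andP [_ ?] _].
have mupos : forall x, 0 < mu x.
  move=> x; case: (ne x) => t [Lt Ft].
  have := sup_upper_bound (hs x) (conj Lt Ft).
  by case/andP: (Hb t Lt) => t0 _ /(lt_le_trans t0).
have mutop : forall x, mu x <= mu \top%O.
  move=> x; apply: ge_sup => // t [Lt _].
  apply: (sup_upper_bound (hs _)); split => //.
  by case: (Hf t Lt) => _ [].
have nest : forall u v, Lam u -> Lam v -> u <= v -> F v `<=` F u.
  move=> u v Lu Lv; rewrite le_eqVlt => /orP [/eqP -> //|/(Hord _ _ Lu Lv) [] //].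
split; [|split].
- move=> x; apply/andP; split; first exact/ltW/mupos.
  apply: (le_trans (muub x)); rewrite invf_le1 ?ler1n //.
- move=> x t _ ht; left; exact: (le_trans ht (mutop x)).
- move=> x a y t s _ _ h1 h2; left.
  rewrite /fin; rewrite leNgt; apply/negP => lt.
  have lt1 : mu x < mu (imp a (imp (imp x y) x)).
    by apply: (lt_le_trans lt); apply: (le_trans _ h1); rewrite ge_min lexx.
  have lt2 : mu x < mu a.
    by apply: (lt_le_trans lt); apply: (le_trans _ h2); rewrite ge_min lexx orbT.
  case: (sup_gt (ne _) lt1) => u1 [L1 F1] g1.
  case: (sup_gt (ne _) lt2) => u2 [L2 F2] g2.
  have key : forall u, Lam u -> u <= u1 -> u <= u2 -> mu x < u -> False.
    move=> u Lu le1 le2 gu.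
    have Fx : F u x.
      case: (Hf u Lu) => _ [_ H]; apply: (H x y a).
      - exact: (nest _ _ Lu L2 le2).
      - exact: (nest _ _ Lu L1 le1).
    have := sup_upper_bound (hs x) (conj Lu Fx).
    by rewrite leNgt gu.
  case: (leP u1 u2) => h.
  + exact: (key u1 L1 (lexx _) h g1).
  + exact: (key u2 L2 (ltW h) (lexx _) g2).
Qed.
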